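(* Let $G=(U\cup V,E)$ be a bipartite graph, where $U$ and $V$ are disjoint stable sets, such that for every $v\in V$ and every $u\in N(v)$ we have $d(u)<2\,d(v)$. If $d(u)\neq d(v)$ for every edge $(u,v)\in E$, then $\eta(G)=1$; otherwise $\eta(G)=2$.
   Context: All graphs are finite, simple and undirected. For a vertex $v$, $N(v)$ is its set of neighbours and $d(v)=|N(v)|$. For a positive integer $k$, $[k]=\{1,\dots,k\}$. For a labeling $f:V(G)\to[k]$ and $S\subseteq V(G)$, $f(S)=\sum_{u\in S}f(u)$. A labeling $f:V(G)\to[k]$ is an additive $k$-coloring if $f(N(u))\neq f(N(v))$ for every edge $(u,v)$ of $G$. The additive chromatic number $\eta(G)$ is the least $k$ for which $G$ has an additive $k$-coloring. *)

(* Defs.v *)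
(* A finite simple graph is a symmetric irreflexive
   relation e on a finite vertex type T. *)
From mathcomp Require Import all_boot.
Set Implicit Arguments. Unset Strict Implicit. Unset Printing Implicit Defensive.

Section AdditiveColoring.
Variable T : finType.
Variable e : rel T.

Definition nbhd (v : T) : {set T} := [set u | e v u].
Definition deg (v : T) : nat := #|nbhd v|.

Definition fsum (f : T -> nat) (S : {set T}) : nat := \sum_(u in S) f u.

Definition additive_coloring (k : nat) (f : T -> nat) : Prop :=
  (forall x, 1 <= f x <= k) /\
  (forall u v, e u v -> fsum f (nbhd u) <> fsum f (nbhd v)).

Definition has_additive_coloring (k : nat) : Prop :=
  exists f : T -> nat, additive_coloring k f.

(* eta_is k  <->  eta(G) = k, i.e. k is the least positive integer for
   which G has an additive k-coloring. *)
Definition eta_is (k : nat) : Prop :=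
  0 < k /\ has_additive_coloring k /\
  (forall k', 0 < k' -> has_additive_coloring k' -> k <= k').
End AdditiveColoring.

(* Main.v *)
Require Import Defs.
From mathcomp Require Import all_boot.

Lemma fsum_const (T : finType) (e : rel T) (f : T -> nat) (c : nat) (x : T) :
  (forall y, e x y -> f y = c) -> fsum f (nbhd e x) = deg e x * c.
Proof.
move=> H; rewrite /fsum /deg -sum_nat_const; apply: eq_bigr => y.
by rewrite inE => /H.
Qed.

Theorem mainTheorem1 (T : finType) (e : rel T) (U : {set T})
  (e_sym : symmetric e) (e_irr : irreflexive e)
  (* bipartite with parts U and V := ~: U (both stable) *)
  (e_bip : forall x y, e x y -> (x \in U) != (y \in U))
  (* for every v in V and every u in N(v): d(u) < 2 d(v) *)
  (hdeg : forall v u, v \notin U -> e v u -> deg e u < 2 * deg e v) :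
  ((forall u v, e u v -> deg e u <> deg e v) -> eta_is e 1) /\
  (~ (forall u v, e u v -> deg e u <> deg e v) -> eta_is e 2).
Proof.
have one : forall f : T -> nat, (forall x, f x = 1) ->
    forall x, fsum f (nbhd e x) = deg e x.
  by move=> f Hf x; rewrite (@fsum_const _ _ _ 1) ?muln1.
split.
  move=> H; split=> //; split; last by [].
  exists (fun _ => 1); split=> // u v euv.
  by rewrite !(one (fun _ => 1)) //; apply: H.
move=> H; split=> //; split.
  pose f := fun x => if x \in U then 2 else 1.
  have fU : forall x, x \in U -> fsum f (nbhd e x) = deg e x.
    move=> x xU; rewrite (@fsum_const _ _ _ 1) ?muln1 // => y exy.
    by have := e_bip _ _ exy; rewrite xU /f; case: (y \in U).
  have fV : forall x, x \notin U -> fsum f (nbhd e x) = deg e x * 2.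
    move=> x xU; rewrite (@fsum_const _ _ _ 2) // => y exy.
    by have := e_bip _ _ exy; rewrite (negbTE xU) /f; case: (y \in U).
  exists f; split; first by move=> x; rewrite /f; case: (x \in U).
  move=> u v euv; have := e_bip _ _ euv.
  case uU: (u \in U); case vU: (v \in U) => // _.
    rewrite fU // fV ?vU // mulnC => Heq.
    have := hdeg v u (negbT vU); rewrite e_sym euv => /(_ isT).
    by rewrite Heq ltnn.
  rewrite fV ?uU // fU // mulnC => Heq.
  have := hdeg u v (negbT uU) euv.
  by rewrite -Heq ltnn.
move=> k' k'0 [f [Hr Hc]].
case: k' k'0 Hr => [//|[|k']] _ Hr //.
exfalso; apply: H => u v euv Hd; apply: (Hc u v euv).
have f1 : forall x, f x = 1 by move=> x; have := Hr x; case: (f x) => [|[]].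
by rewrite !(one f f1).
Qed.
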